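(* Define \[ \nu_1(z;q):=\sum_{n=0}^{\infty} \frac{z^n q^{n^2+n}}{(-q;q^2)_{n+1}}. \] Then, as formal power series in $q$ whose coefficients are polynomials in $z$ (equivalently, for $|q|<1$ and $z$ in a suitable region of convergence), \[ \nu_1(z;q)=\sum_{n=0}^{\infty} (zq;q^2)_n\,(-q)^n . \]
   Context: For $a$ and $q$, $(a;q)_0:=1$, $(a;q)_n:=(1-a)(1-aq)\cdots(1-aq^{n-1})$ for $n\ge1$. *)

(* Defs.v *)
(* Formal power series in q with coefficients in Z[z] are
   handled through their truncations modulo q^N, represented as elements of
   {poly {poly int}} (outer variable q, inner variable z). *)
From mathcomp Require Import all_boot all_order all_algebra.
Set Implicit Arguments. Unset Strict Implicit. Unset Printing Implicit Defensive.
Import Order.TTheory GRing.Theory Num.Theory.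
Local Open Scope ring_scope.

Notation ZzQ := {poly {poly int}}.

Definition qv : ZzQ := 'X.
Definition zv : ZzQ := ('X : {poly int})%:P.

Definition qpoch (a q : ZzQ) (n : nat) : ZzQ := \prod_(i < n) (1 - a * q ^+ i).

Definition trunc (N : nat) (p : ZzQ) : ZzQ := \poly_(i < N) p`_i.

(* inverse modulo q^N of a power series p with p(0) = 1:
   1/p = sum_j (1-p)^j, truncated *)
Definition inv_trunc (N : nat) (p : ZzQ) : ZzQ :=
  trunc N (\sum_(j < N) (1 - p) ^+ j).

(* nu_1(z;q) modulo q^N.  Terms with n >= N are divisible by q^(n^2+n),
   hence by q^N, so they are omitted. *)
Definition nu1_trunc (N : nat) : ZzQ :=
  trunc N (\sum_(n < N) zv ^+ n * qv ^+ (n * n + n)%N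
                         * inv_trunc N (qpoch (- qv) (qv ^+ 2) n.+1)).

(* sum_{n>=0} (zq;q^2)_n (-q)^n modulo q^N.  Terms with n >= N are divisible
   by q^n, hence by q^N, so they are omitted. *)
Definition rhs_trunc (N : nat) : ZzQ :=
  trunc N (\sum_(n < N) qpoch (zv * qv) (qv ^+ 2) n * (- qv) ^+ n).

(* Main.v *)
Require Import Defs.
From mathcomp Require Import all_boot all_order all_algebra.
From mathcomp Require Import ring zify.
Set Implicit Arguments. Unset Strict Implicit. Unset Printing Implicit Defensive.
Import Order.TTheory GRing.Theory Num.Theory.
Local Open Scope ring_scope.

Lemma comm1 : commr_rmorph (intr : int -> ZzQ) (zv * qv ^+ 2).
Proof. by move=> a; rewrite /GRing.comm mulrC. Qed.
Definition phi := horner_morph comm1.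
Lemma comm2 : commr_rmorph phi qv.
Proof. by move=> a; rewrite /GRing.comm mulrC. Qed.
Definition sig : {rmorphism ZzQ -> ZzQ} := horner_morph comm2.
Lemma sig_q : sig qv = qv.
Proof. exact: horner_morphX. Qed.
Lemma sig_z : sig zv = zv * qv ^+ 2.
Proof. rewrite /zv; have -> : sig ('X : {poly int})%:P = phi 'X by exact: horner_morphC.
exact: horner_morphX. Qed.

Definition cong (K : nat) (p r : ZzQ) := exists c, p - r = qv ^+ K * c.

Lemma cong0 p r : cong 0 p r.
Proof. by exists (p - r); rewrite expr0 mul1r. Qed.
Lemma cong_refl K p : cong K p p.
Proof. by exists 0; rewrite subrr mulr0. Qed.
Lemma cong_sym K p r : cong K p r -> cong K r p.
Proof. by case=> c h; exists (- c); rewrite mulrN -h opprB. Qed.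
Lemma cong_trans K p r s : cong K p r -> cong K r s -> cong K p s.
Proof.
by case=> c h [d h']; exists (c + d); rewrite mulrDr -h -h' addrA subrK.
Qed.
Lemma congD K p r p' r' : cong K p r -> cong K p' r' -> cong K (p + p') (r + r').
Proof.
case=> c h [d h']; exists (c + d); rewrite mulrDr -h -h'; ring.
Qed.
Lemma congN K p r : cong K p r -> cong K (- p) (- r).
Proof. case=> c h; exists (- c); rewrite mulrN -h; ring. Qed.
Lemma congB K p r p' r' : cong K p r -> cong K p' r' -> cong K (p - p') (r - r').
Proof. by move=> h h'; apply: congD => //; apply: congN. Qed.
Lemma congM K p r p' r' : cong K p r -> cong K p' r' -> cong K (p * p') (r * r').
Proof.
case=> c h [d h']; exists (c * p' + r * d).
have -> : p * p' - r * r' = (p - r) * p' + r * (p' - r') by ring.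
rewrite h h'; ring.
Qed.
Lemma cong_sum K n (F G : 'I_n -> ZzQ) :
  (forall i, cong K (F i) (G i)) -> cong K (\sum_(i < n) F i) (\sum_(i < n) G i).
Proof.
move=> h; elim/big_rec2: _ => [|i x y _ hxy]; first exact: cong_refl.
exact: congD.
Qed.
Lemma cong_prod K n (F G : 'I_n -> ZzQ) :
  (forall i, cong K (F i) (G i)) -> cong K (\prod_(i < n) F i) (\prod_(i < n) G i).
Proof.
move=> h; elim/big_rec2: _ => [|i x y _ hxy]; first exact: cong_refl.
exact: congM.
Qed.
Lemma cong_le N K p r : (N <= K)%N -> cong K p r -> cong N p r.
Proof.
move=> hNK [c h]; exists (qv ^+ (K - N) * c).
by rewrite h mulrA -exprD subnKC.
Qed.
Lemma cong_q0 K c : cong K (qv ^+ K * c) 0.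
Proof. by exists c; rewrite subr0. Qed.
Lemma cong_sig K p r : cong K p r -> cong K (sig p) (sig r).
Proof.
case=> c h; exists (sig c); rewrite -rmorphB h rmorphM rmorphXn.
by rewrite sig_q.
Qed.
Lemma cong_qmul N p r : cong N p r -> cong N.+1 (qv * p) (qv * r).
Proof. by case=> c h; exists c; rewrite -mulrBr h exprS mulrA. Qed.

Lemma cong_trunc K p : cong K (trunc K p) p.
Proof.
exists (- drop_poly K p).
have e : trunc K p = take_poly K p by [].
rewrite e -{2}(poly_take_drop K p) /qv; ring.
Qed.
Lemma trunc_cong K p r : cong K p r -> trunc K p = trunc K r.
Proof.
case=> c h; apply/polyP => i; rewrite !coef_poly.
case: ifP => // hi.
have -> : p = r + qv ^+ K * c by rewrite -h; ring.
by rewrite coefD mulrC /qv coefMXn hi addr0.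
Qed.

Lemma cong_inv K D : cong 1 D 1 -> cong K (inv_trunc K D * D) 1.
Proof.
case=> c h; rewrite expr1 in h.
apply: (@cong_trans _ _ ((\sum_(j < K) (1 - D) ^+ j) * D)).
  by apply: congM; [apply: cong_trunc | apply: cong_refl].
have e := subrX1 (1 - D) K.
have -> : (\sum_(j < K) (1 - D) ^+ j) * D = 1 - (1 - D) ^+ K.
  have -> : (\sum_(j < K) (1 - D) ^+ j) * D = - ((1 - D - 1) * \sum_(j < K) (1 - D) ^+ j) by ring.
  by rewrite -e; ring.
have -> : 1 - D = qv * (- c) by rewrite mulrN -h; ring.
rewrite exprMn; exists (- (- c) ^+ K); ring.
Qed.

Lemma inv_rel K E D E' D' c :
  cong K (E * D) 1 -> cong K (E' * D') 1 -> D' = D * c -> cong K E (c * E').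
Proof.
move=> h h' e.
have h1 := congM (cong_refl K E) (cong_sym h'); rewrite mulr1 in h1.
apply: (cong_trans h1); rewrite e.
have -> : E * (E' * (D * c)) = (E * D) * (c * E') by ring.
by have := congM h (cong_refl K (c * E')); rewrite mul1r.
Qed.

Lemma uniq_fe K A B :
  cong K A (1 - qv * ((1 - zv * qv) * sig A)) ->
  cong K B (1 - qv * ((1 - zv * qv) * sig B)) -> cong K A B.
Proof.
move=> hA hB.
suff: forall N, (N <= K)%N -> cong N A B by apply.
elim=> [|N IH] hN; first exact: cong0.
have h := IH (ltnW hN).
apply: (cong_trans (cong_le hN hA)); apply: cong_sym.
apply: (cong_trans (cong_le hN hB)); apply: cong_sym.
apply: congB; first exact: cong_refl.
apply: cong_qmul; apply: congM; [exact: cong_refl | exact: cong_sig].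
Qed.

Definition P n := qpoch (zv * qv) (qv ^+ 2) n.
Lemma P_succ n : P n.+1 = (1 - zv * qv) * sig (P n).
Proof.
rewrite /P /qpoch big_ord_recl rmorph_prod; congr (_ * _).
  by rewrite expr0 mulr1.
apply: eq_bigr => i _; rewrite rmorphB rmorph1 !rmorphM !rmorphXn sig_z sig_q lift0.
rewrite exprS.
ring.
Qed.

Definition B K := \sum_(n < K) P n * (- qv) ^+ n.
Lemma fe_B K : cong K (B K) (1 - qv * ((1 - zv * qv) * sig (B K))).
Proof.
case: K => [|k]; first exact: cong0.
set S := \sum_(n < k) sig (P n) * (- qv) ^+ n.
have e1 : B k.+1 = 1 - qv * (1 - zv * qv) * S.
  rewrite /B big_ord_recl /=.
  have -> : P 0 = 1 by rewrite /P /qpoch big_ord0.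
  rewrite expr0 mulr1.
  rewrite /S mulr_sumr -sumrN; congr (_ + _); apply: eq_bigr => i _.
  rewrite P_succ exprS /=; ring.
have e2 : sig (B k.+1) = S + sig (P k) * (- qv) ^+ k.
  rewrite /B rmorph_sum big_ord_recr /=; congr (_ + _).
    by apply: eq_bigr => i _; rewrite rmorphM rmorphXn rmorphN sig_q.
  by rewrite rmorphM rmorphXn rmorphN sig_q.
rewrite e2 e1; exists ((1 - zv * qv) * sig (P k) * (- 1) ^+ k).
have -> : (- qv) ^+ k = (- 1) ^+ k * qv ^+ k by rewrite -exprMn mulN1r.
rewrite exprS; ring.
Qed.

Definition D n := qpoch (- qv) (qv ^+ 2) n.
Definition E K n := inv_trunc K (D n.+1).
Definition T n := zv ^+ n * qv ^+ (n * n + n).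
Definition A K := \sum_(n < K) T n * E K n.

Lemma D1 n : cong 1 (D n) 1.
Proof.
have := @cong_prod 1 n (fun i => 1 - - qv * (qv ^+ 2) ^+ i) (fun _ => 1).
rewrite prodr_const expr1n; apply => i.
by exists ((qv ^+ 2) ^+ i); rewrite expr1; ring.
Qed.
Lemma hE K n : cong K (E K n * D n.+1) 1.
Proof. exact: cong_inv (D1 _). Qed.
Lemma sigD n : sig (D n) = D n.
Proof.
rewrite /D /qpoch rmorph_prod; apply: eq_bigr => i _.
by rewrite rmorphB rmorph1 rmorphM rmorphN !rmorphXn sig_q.
Qed.
Lemma sigE K n : cong K (sig (E K n)) (E K n).
Proof.
have h : cong K (sig (E K n) * D n.+1) 1.
  by have := cong_sig (hE K n); rewrite rmorphM rmorph1 sigD.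
by have := inv_rel h (hE K n) (esym (mulr1 _)); rewrite mul1r.
Qed.
Definition cc n : ZzQ := 1 - - qv * (qv ^+ 2) ^+ n.+1.
Lemma Dsucc n : D n.+2 = D n.+1 * cc n.
Proof. by rewrite /D /qpoch big_ord_recr. Qed.
Lemma Erel K n : cong K (E K n) (cc n * E K n.+1).
Proof. exact: inv_rel (hE K n) (hE K n.+1) (Dsucc n). Qed.
Lemma sigT n : sig (T n) = T n * (qv ^+ 2) ^+ n.
Proof.
rewrite /T rmorphM !rmorphXn sig_z sig_q exprMn; ring.
Qed.
Lemma T_succ n : zv * qv ^+ 2 * (T n * (qv ^+ 2) ^+ n) = T n.+1.
Proof.
rewrite /T -exprM.
have -> : (n.+1 * n.+1 + n.+1 = (n * n + n) + 2 * n + 2)%N by nia.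
rewrite !exprD exprS.
rewrite [zv ^+ n.+1]exprS; ring.
Qed.

Lemma cong_sub0 K p r : cong K (p - r) 0 -> cong K p r.
Proof. by case=> c h; exists c; rewrite -h subr0. Qed.

Lemma fe_A K : cong K (A K) (1 - qv * ((1 - zv * qv) * sig (A K))).
Proof.
case: K => [|k]; first exact: cong0.
set K := k.+1.
set a := fun n => T n * E K n.
set sa := fun n => T n * (qv ^+ 2) ^+ n * sig (E K n).
have esa : sig (A K) = \sum_(n < K) sa n.
  rewrite /A rmorph_sum; apply: eq_bigr => i _; by rewrite rmorphM sigT.
have eA1 : A K = a 0%N + \sum_(n < k) a n.+1 by rewrite /A big_ord_recl.
have eS1 : \sum_(n < K) sa n = sa 0%N + \sum_(n < k) sa n.+1 by rewrite big_ord_recl.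
have eS2 : \sum_(n < K) sa n = \sum_(n < k) sa n + sa k by rewrite big_ord_recr.
apply: cong_sub0.
have -> : A K - (1 - qv * ((1 - zv * qv) * sig (A K))) =
   (a 0%N + qv * sa 0%N - 1)
   + \sum_(n < k) (a n.+1 + qv * sa n.+1 - zv * qv ^+ 2 * sa n)
   - zv * qv ^+ 2 * sa k.
  rewrite esa.
  have -> : qv * ((1 - zv * qv) * \sum_(n < K) sa n) =
      qv * \sum_(n < K) sa n - zv * qv ^+ 2 * \sum_(n < K) sa n by rewrite expr2; ring.
  rewrite {1}eS1 eS2 eA1 !big_split /= -!mulr_sumr.
rewrite sumrN -mulr_sumr; ring.
apply: (@cong_trans _ _ (0 + 0 - 0)); last by rewrite addr0 subr0; exact: cong_refl.
apply: congB; first apply: congD.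
-
  have e0 : D 1 = 1 + qv by rewrite /D /qpoch big_ord1 expr0 mulr1 opprK.
  have hT0 : T 0 = 1 by rewrite /T !expr0 mulr1.
  apply: (@cong_trans _ _ (E K 0 * D 1 - 1)); last first.
    by rewrite -(subrr 1); apply: congB; [apply: hE | apply: cong_refl].
  rewrite e0 /a /sa hT0 !mul1r; apply: congB; last exact: cong_refl.
  have := congD (cong_refl K (E K 0)) (congM (cong_refl K qv) (sigE K 0)).
  by move=> h; apply: (cong_trans h); rewrite mulrDr mulr1 [qv * _]mulrC; exact: cong_refl.
- apply: (@cong_trans _ _ (\sum_(n < k) (0 : ZzQ))); last by rewrite big1 //; exact: cong_refl.
  apply: cong_sum => i.
  rewrite /a /sa.
  apply: (@cong_trans _ _ (T i.+1 * E K i.+1 + T i.+1 * (qv * (qv ^+ 2) ^+ i.+1) * E K i.+1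
             - T i.+1 * (cc i * E K i.+1))); last first.
    by rewrite /cc -[0 : ZzQ](subrr 0); rewrite [X in cong _ _ X]subrr; exists 0; rewrite mulr0; ring.
  apply: congB; [apply: congD|].
  + exact: cong_refl.
  + have -> : T i.+1 * (qv * (qv ^+ 2) ^+ i.+1) * E K i.+1 = qv * (T i.+1 * (qv ^+ 2) ^+ i.+1 * E K i.+1) by ring.
    apply: congM; first exact: cong_refl.
    apply: congM; [exact: cong_refl | exact: sigE].
  + rewrite -T_succ.
    have -> : zv * qv ^+ 2 * (T i * (qv ^+ 2) ^+ i * sig (E K i)) = zv * qv ^+ 2 * (T i * (qv ^+ 2) ^+ i) * sig (E K i) by ring.
    apply: congM; first exact: cong_refl.
    exact: cong_trans (sigE K i) (Erel K i).
- rewrite /sa.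
  have -> : zv * qv ^+ 2 * (T k * (qv ^+ 2) ^+ k * sig (E K k)) = T k.+1 * sig (E K k).
    by rewrite -T_succ; ring.
  rewrite /T.
  have e : forall m, (m.+1 * m.+1 + m.+1 = m.+1 + (m * m + 2 * m + 1))%N by move=> m; nia.
  rewrite e.
  rewrite exprD; exists (zv ^+ k.+1 * qv ^+ (k * k + 2 * k + 1) * sig (E K k)); ring.
Qed.

Theorem theorem1p2 : forall N : nat, nu1_trunc N = rhs_trunc N.
Proof.
move=> N.
change (trunc N (A N) = trunc N (B N)).
apply: trunc_cong; exact: uniq_fe (fe_A N) (fe_B N).
Qed.
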